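(* Let $B$ be a nonzero real vector space, $\lfloor\cdot,\cdot\rfloor$ a symmetric bilinear form on $B$, $q(b):=\tfrac12\lfloor b,b\rfloor$. Let $f\colon B\to\,]{-}\infty,\infty]$ be proper and convex, with $f\ge q$ on $B$ and ${\cal P}_q(f)\ne\emptyset$. Then ${\cal P}_q(f)$ is a $q$--positive subset of $B$.
   Context: ${\cal P}_q(f):=\{b\in B\colon f(b)=q(b)\}$. A subset $A$ is $q$--positive if $A\neq\emptyset$ and $q(b-c)\ge0$ for all $b,c\in A$. *)

(* Defs.v *)
From HB Require Import structures.
From mathcomp Require Import all_boot all_order all_algebra.
From mathcomp Require Import boolp classical_sets reals constructive_ereal ereal.
Set Implicit Arguments. Unset Strict Implicit. Unset Printing Implicit Defensive.
Import Order.TTheory GRing.Theory Num.Theory.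
Local Open Scope classical_set_scope.
Local Open Scope ring_scope.

(* bf is a symmetric bilinear form on B (linearity in the second argument
   follows from symmetry). *)
Definition sym_bilinear (R : realType) (B : lmodType R) (bf : B -> B -> R) : Prop :=
  [/\ (forall a b c : B, bf (a + b) c = bf a c + bf b c),
      (forall (r : R) (a c : B), bf (r *: a) c = r * bf a c) &
      (forall a c : B, bf a c = bf c a)].

Definition qform (R : realType) (B : lmodType R) (bf : B -> B -> R) (b : B) : R :=
  2^-1 * bf b b.

Definition proper_fun (R : realType) (B : lmodType R) (f : B -> \bar R) : Prop :=
  (forall b, f b != -oo%E) /\ (exists b, f b != +oo%E).

Definition convex_fun (R : realType) (B : lmodType R) (f : B -> \bar R) : Prop :=
  forall (b c : B) (t : R), 0 < t < 1 ->
    let x : B := (1 - t) *: b + t *: c in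
    (f x <= (1 - t)%:E * f b + t%:E * f c)%E.

Definition Pq (R : realType) (B : lmodType R) (q : B -> R) (f : B -> \bar R) : set B :=
  [set b | f b = (q b)%:E].

Definition q_positive (R : realType) (B : lmodType R) (q : B -> R) (A : set B) : Prop :=
  A !=set0 /\ (forall b c, A b -> A c -> 0 <= q (b - c)).

(* Main.v *)
Require Import Defs.
From HB Require Import structures.
From mathcomp Require Import all_boot all_order all_algebra.
From mathcomp Require Import boolp classical_sets reals constructive_ereal ereal.
From mathcomp Require Import ring lra.
Import Order.TTheory GRing.Theory Num.Theory.
Local Open Scope classical_set_scope.
Local Open Scope ring_scope.

Theorem lemma3p17 (R : realType) (B : lmodType R) (bf : B -> B -> R)
  (f : B -> \bar R) :
  (exists b : B, b != 0) ->
  sym_bilinear bf ->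
  proper_fun f ->
  convex_fun f ->
  (forall b, ((qform bf b)%:E <= f b)%E) ->
  Pq (qform bf) f !=set0 ->
  q_positive (qform bf) (Pq (qform bf) f).
Proof.
move=> _ [bD bZ bS] _ cvx fge Pne; split => // b c Pb Pc.
have bDr : forall a x y, bf a (x + y) = bf a x + bf a y.
  by move=> a x y; rewrite bS bD (bS x) (bS y).
have bZr : forall r a x, bf a (r *: x) = r * bf a x.
  by move=> r a x; rewrite bS bZ bS.
have ht : 0 < (2^-1 : R) < 1 by apply/andP; split; lra.
have := cvx b c _ ht => /=.
have := fge ((1 - 2^-1) *: b + 2^-1 *: c).
have -> : b - c = b + (-1) *: c by rewrite scaleN1r.
move=> h1 h2; have := le_trans h1 h2.
rewrite /Pq /= in Pb Pc; rewrite Pb Pc -!EFinM -EFinD lee_fin.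
rewrite /qform !(bD, bDr, bZ, bZr).
rewrite (bS c b).
have e2 : (1 - 2^-1 : R) = 2^-1 by lra.
rewrite e2; move: (bf b b) (bf b c) (bf c c) => x y z H.
lra.
Qed.
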